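(* Let $\mathsf V$ be a quantale whose underlying lattice is a Heyting algebra and which satisfies $w\wedge(u\otimes v)=\bigvee\{u'\otimes v'\mid u'\le u,\ v'\le v,\ u'\otimes v'\le w\}$ for all $u,v,w\in\mathsf V$. Then the full subcategory of $\mathsf{Cat}(\mathsf V)$ consisting of the injective $\mathsf V$-categories is Cartesian closed.
   Context: A quantale $(\mathsf V,\otimes,k)$ is a complete anti-symmetric lattice with an associative, commutative operation $\otimes$ with neutral element $k$ distributing over arbitrary suprema. A $\mathsf V$-category $(X,a)$ is a set with $a:X\times X\to\mathsf V$ such that $k\le a(x,x)$ and $a(x,y)\otimes a(y,z)\le a(x,z)$; a $\mathsf V$-functor $f:(X,a)\to(Y,b)$ satisfies $a(x,y)\le b(f(x),f(y))$; these form $\mathsf{Cat}(\mathsf V)$, whose products have structure given by pointwise $\wedge$. $f$ is fully faithful if $a(x,y)=b(f(x),f(y))$. For $\mathsf V$-functors $f,g$, $f\simeq g$ means $k\le b(f(x),g(x))$ and $k\le b(g(x),f(x))$ for all $x$. $X$ is injective if for every fully faithful $i:A\to B$ and $f:A\to X$ there is $g:B\to X$ with $g\cdot i\simeq f$. *)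

(* Defs.v *)
Set Implicit Arguments.
Unset Strict Implicit.

Record quantale := Quantale {
  qV :> Type;
  qle : qV -> qV -> Prop;
  qle_refl : forall u, qle u u;
  qle_trans : forall u v w, qle u v -> qle v w -> qle u w;
  qle_antisym : forall u v, qle u v -> qle v u -> u = v;
  qsup : (qV -> Prop) -> qV;
  qsup_ub : forall (S : qV -> Prop) u, S u -> qle u (qsup S);
  qsup_least : forall (S : qV -> Prop) w, (forall u, S u -> qle u w) -> qle (qsup S) w;
  qten : qV -> qV -> qV;
  qk : qV;
  qten_assoc : forall u v w, qten u (qten v w) = qten (qten u v) w;
  qten_comm : forall u v, qten u v = qten v u;
  qten_unit : forall u, qten qk u = u;
  qten_sup : forall u (S : qV -> Prop),
      qten u (qsup S) = qsup (fun x => exists s, S s /\ x = qten u s)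
}.

Arguments qle {q}.
Arguments qsup {q}.
Arguments qten {q}.
Arguments qk {q}.

Definition qmeet (V : quantale) (u v : V) : V :=
  qsup (fun w => qle w u /\ qle w v).

Definition heyting (V : quantale) : Prop :=
  exists imp : V -> V -> V,
    forall a b c : V, qle c (imp a b) <-> qle (qmeet c a) b.

Definition meet_tensor_condition (V : quantale) : Prop :=
  forall u v w : V,
    qmeet w (qten u v) =
    qsup (fun x => exists u' v' : V,
            qle u' u /\ qle v' v /\ qle (qten u' v') w /\ x = qten u' v').

Record vcat (V : quantale) := VCat {
  vob :> Type;
  vhom : vob -> vob -> V;
  vhom_refl : forall x, qle qk (vhom x x);
  vhom_trans : forall x y z, qle (qten (vhom x y) (vhom y z)) (vhom x z)
}.

Arguments vhom {V} _ _ _.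

Definition vfunctor (V : quantale) (X Y : vcat V) (f : X -> Y) : Prop :=
  forall x y, qle (vhom X x y) (vhom Y (f x) (f y)).

Definition fully_faithful (V : quantale) (X Y : vcat V) (f : X -> Y) : Prop :=
  forall x y, vhom X x y = vhom Y (f x) (f y).

Definition viso (V : quantale) (X Y : vcat V) (f g : X -> Y) : Prop :=
  forall x, qle qk (vhom Y (f x) (g x)) /\ qle qk (vhom Y (g x) (f x)).

Definition injective_vcat (V : quantale) (X : vcat V) : Prop :=
  forall (A B : vcat V) (i : A -> B) (f : A -> X),
    vfunctor i -> fully_faithful i -> vfunctor f ->
    exists g : B -> X, vfunctor g /\ viso (fun a => g (i a)) f.

(** * Cartesian closedness of the full subcategory of Cat(V) on the
      objects satisfying P (morphisms = V-functors; two morphisms are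
      equal iff they are equal as functions, stated pointwise). *)
Section FullSub.
Variables (V : quantale) (P : vcat V -> Prop).

Definition is_terminal_in (T : vcat V) : Prop :=
  P T /\
  forall X : vcat V, P X ->
    (exists f : X -> T, vfunctor f) /\
    (forall f g : X -> T, vfunctor f -> vfunctor g -> forall x, f x = g x).

Definition is_product_in {A B C : vcat V} (p1 : C -> A) (p2 : C -> B) : Prop :=
  P C /\ vfunctor p1 /\ vfunctor p2 /\
  forall (Z : vcat V), P Z -> forall (f : Z -> A) (g : Z -> B),
    vfunctor f -> vfunctor g ->
    (exists h : Z -> C, vfunctor h /\ forall z, p1 (h z) = f z /\ p2 (h z) = g z) /\
    (forall h h' : Z -> C, vfunctor h -> vfunctor h' ->
        (forall z, p1 (h z) = f z /\ p2 (h z) = g z) ->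
        (forall z, p1 (h' z) = f z /\ p2 (h' z) = g z) ->
        forall z, h z = h' z).

(** (E, ev : C -> Z) is an exponential Z^X, where (C, c1, c2) is a product
    E x X; the transpose condition for h : A -> E and a product (Q,q1,q2) of
    A and X says ev o (h x id_X) = g, with h x id_X : Q -> C the induced map. *)
Definition transposes {X Z E C : vcat V} (c1 : C -> E) (c2 : C -> X) (ev : C -> Z)
    {A Q : vcat V} (q1 : Q -> A) (q2 : Q -> X) (g : Q -> Z) (h : A -> E) : Prop :=
  exists m : Q -> C, vfunctor m /\
    forall q, c1 (m q) = h (q1 q) /\ c2 (m q) = q2 q /\ ev (m q) = g q.

Definition is_exponential_in {X Z E C : vcat V} (c1 : C -> E) (c2 : C -> X)
    (ev : C -> Z) : Prop :=
  P E /\ is_product_in c1 c2 /\ vfunctor ev /\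
  forall (A : vcat V), P A ->
  forall (Q : vcat V) (q1 : Q -> A) (q2 : Q -> X), is_product_in q1 q2 ->
  forall g : Q -> Z, vfunctor g ->
    (exists h : A -> E, vfunctor h /\ transposes c1 c2 ev q1 q2 g h) /\
    (forall h h' : A -> E, vfunctor h -> vfunctor h' ->
       transposes c1 c2 ev q1 q2 g h -> transposes c1 c2 ev q1 q2 g h' ->
       forall a, h a = h' a).

Definition cartesian_closed_sub : Prop :=
  (exists T : vcat V, is_terminal_in T) /\
  (forall A B : vcat V, P A -> P B ->
     exists (C : vcat V) (p1 : C -> A) (p2 : C -> B), is_product_in p1 p2) /\
  (forall X Z : vcat V, P X -> P Z ->
     exists (E C : vcat V) (c1 : C -> E) (c2 : C -> X) (ev : C -> Z),
       is_exponential_in c1 c2 ev).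

End FullSub.

(* Main.v *)
Require Import Defs.
From Stdlib Require Import ProofIrrelevance FunctionalExtensionality.
Set Implicit Arguments.
Unset Strict Implicit.

Section Q.
Context {V : quantale}.

Lemma lt {u v w : V} : qle u v -> qle v w -> qle u w.
Proof. apply qle_trans. Qed.

Definition qtop : V := qsup (fun _ => True).
Lemma le_top (u : V) : qle u qtop.
Proof. apply qsup_ub; exact I. Qed.

Lemma qsup_pair_eq (a b : V) : qle a b -> qsup (fun w => w = a \/ w = b) = b.
Proof.
  intros H. apply qle_antisym.
  - apply qsup_least. intros w [->| ->]; [exact H| apply qle_refl].
  - apply qsup_ub. now right.
Qed.

Lemma qten_mono_r (a b c : V) : qle a b -> qle (qten c a) (qten c b).
Proof.
  intros H. pose proof (qsup_pair_eq H) as E. rewrite <- E. rewrite qten_sup.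
  apply qsup_ub. exists a. split; auto.
Qed.

Lemma qten_mono_l (a b c : V) : qle a b -> qle (qten a c) (qten b c).
Proof. intros H. rewrite (qten_comm a), (qten_comm b). now apply qten_mono_r. Qed.

Lemma qten_mono (a b c d : V) : qle a b -> qle c d -> qle (qten a c) (qten b d).
Proof. intros H1 H2. eapply lt. apply qten_mono_l, H1. apply qten_mono_r, H2. Qed.

Lemma qten_sup_le (a : V) S (b : V) :
  (forall s, S s -> qle (qten a s) b) -> qle (qten a (qsup S)) b.
Proof. intros H. rewrite qten_sup. apply qsup_least. intros x [s [Hs ->]]. auto. Qed.

Lemma qten_sup_le_l S (a b : V) :
  (forall s, S s -> qle (qten s a) b) -> qle (qten (qsup S) a) b.
Proof. intros H. rewrite qten_comm. apply qten_sup_le. intros s Hs. rewrite qten_comm. auto. Qed.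

Lemma qten_k_r (u : V) : qten u qk = u.
Proof. rewrite qten_comm. apply qten_unit. Qed.

Lemma qten_swap (a b c : V) : qten (qten a b) c = qten (qten a c) b.
Proof. rewrite <- !qten_assoc. now rewrite (qten_comm b c). Qed.

Lemma qmeet_lb1 (a b : V) : qle (qmeet a b) a.
Proof. apply qsup_least. intros u [H _]; exact H. Qed.
Lemma qmeet_lb2 (a b : V) : qle (qmeet a b) b.
Proof. apply qsup_least. intros u [_ H]; exact H. Qed.
Lemma qmeet_glb (a b c : V) : qle c a -> qle c b -> qle c (qmeet a b).
Proof. intros. apply qsup_ub. now split. Qed.
Lemma qmeet_comm (a b : V) : qmeet a b = qmeet b a.
Proof.
  apply qle_antisym; apply qmeet_glb; (apply qmeet_lb1 || apply qmeet_lb2).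
Qed.
Lemma qmeet_mono (a b c d : V) : qle a b -> qle c d -> qle (qmeet a c) (qmeet b d).
Proof. intros. apply qmeet_glb; eapply lt; [apply qmeet_lb1| |apply qmeet_lb2|]; auto. Qed.

Definition qimp (u a : V) : V := qsup (fun w => qle (qten w u) a).
Lemma qimp_elim (u a : V) : qle (qten (qimp u a) u) a.
Proof. apply qten_sup_le_l. auto. Qed.
Lemma qimp_intro (w u a : V) : qle (qten w u) a -> qle w (qimp u a).
Proof. intros. now apply qsup_ub. Qed.

Lemma meet_sup_le (HV : heyting V) S (a b : V) :
  (forall s, S s -> qle (qmeet s a) b) -> qle (qmeet (qsup S) a) b.
Proof.
  destruct HV as [imp Himp]. intros H.
  apply Himp. apply qsup_least. intros s Hs. apply Himp. auto.
Qed.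
End Q.
Section C.
Variable V : quantale.

Lemma vtrans (X : vcat V) (x y z : X) (a b : V) :
  qle a (vhom X x y) -> qle b (vhom X y z) -> qle (qten a b) (vhom X x z).
Proof. intros H1 H2. eapply lt; [apply (qten_mono H1 H2)|apply vhom_trans]. Qed.

Definition prod_hom (A B : vcat V) (p q : A * B) : V :=
  qmeet (vhom A (fst p) (fst q)) (vhom B (snd p) (snd q)).
Lemma prod_refl (A B : vcat V) p : qle qk (@prod_hom A B p p).
Proof. apply qmeet_glb; apply vhom_refl. Qed.
Lemma prod_trans (A B : vcat V) p q r :
  qle (qten (@prod_hom A B p q) (@prod_hom A B q r)) (@prod_hom A B p r).
Proof.
  unfold prod_hom; apply qmeet_glb; eapply vtrans; (apply qmeet_lb1 || apply qmeet_lb2).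
Qed.
Definition vprod (A B : vcat V) : vcat V :=
  @VCat V (A * B) (@prod_hom A B) (@prod_refl A B) (@prod_trans A B).

Definition unit_cat : vcat V :=
  @VCat V unit (fun _ _ => @qtop V) (fun _ => le_top _) (fun _ _ _ => le_top _).

Lemma prod_inj (A B : vcat V) :
  injective_vcat A -> injective_vcat B -> injective_vcat (vprod A B).
Proof.
  intros HA HB A' B' i f Hi Hff Hf.
  destruct (HA A' B' i (fun a => fst (f a)) Hi Hff) as [g1 [Hg1 Hv1]].
  { intros x y. eapply lt. apply Hf. apply qmeet_lb1. }
  destruct (HB A' B' i (fun a => snd (f a)) Hi Hff) as [g2 [Hg2 Hv2]].
  { intros x y. eapply lt. apply Hf. apply qmeet_lb2. }
  exists (fun b => (g1 b, g2 b)). split.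
  - intros x y. apply qmeet_glb; [apply Hg1|apply Hg2].
  - intros x. destruct (Hv1 x), (Hv2 x). split; apply qmeet_glb; auto.
Qed.

Lemma unit_inj : injective_vcat unit_cat.
Proof.
  intros A B i f _ _ _. exists (fun _ => tt). split.
  - intros x y. apply le_top.
  - intros x. split; apply le_top.
Qed.

Lemma prod_is_product (A B : vcat V) :
  injective_vcat A -> injective_vcat B ->
  is_product_in (@injective_vcat V) (C := vprod A B) fst snd.
Proof.
  intros HA HB. split; [apply prod_inj; auto|]. split; [intros x y; apply qmeet_lb1|].
  split; [intros x y; apply qmeet_lb2|].
  intros Z HZ f g Hf Hg. split.
  - exists (fun z => (f z, g z)). split.
    + intros x y. apply qmeet_glb; auto.
    + intros z; split; reflexivity.
  - intros h h' _ _ H1 H2 z.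
    destruct (H1 z), (H2 z).
    rewrite (surjective_pairing (h z)), (surjective_pairing (h' z)). congruence.
Qed.

Lemma unit_terminal : is_terminal_in (@injective_vcat V) unit_cat.
Proof.
  split; [apply unit_inj|]. intros X _. split.
  - exists (fun _ => tt). intros x y. apply le_top.
  - intros f g _ _ x. destruct (f x), (g x). reflexivity.
Qed.
End C.
Section Tens.
Context {V : quantale} (X : vcat V) (x0 : X) (u : V).

Let P (z : X) : V := qimp u (vhom X x0 z).
Let Qh (y : X) : V := qten (vhom X y x0) u.
Let T : V := qsup (fun w => w = qk \/ exists y, w = qten (P y) (Qh y)).

Definition ext_hom (a b : option X) : V :=
  match a, b with
  | Some y, Some z => vhom X y z
  | Some y, None => Qh y
  | None, Some z => P z
  | None, None => T
  end.

Lemma c2 y z : qle (qten (vhom X y z) (Qh z)) (Qh y).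
Proof. unfold Qh. rewrite qten_assoc. apply qten_mono_l. apply vhom_trans. Qed.
Lemma c3 y z : qle (qten (Qh y) (P z)) (vhom X y z).
Proof.
  unfold Qh, P. rewrite <- qten_assoc. eapply lt; [|apply vhom_trans].
  apply qten_mono_r. rewrite qten_comm. apply qimp_elim.
Qed.
Lemma c5 y z : qle (qten (P y) (vhom X y z)) (P z).
Proof.
  unfold P at 2. apply qimp_intro. rewrite qten_swap.
  eapply lt; [|apply vhom_trans]. apply qten_mono_l. apply qimp_elim.
Qed.
Lemma c6 y : qle (qten (P y) (Qh y)) T.
Proof. apply qsup_ub. right. eauto. Qed.
Lemma c7 z : qle (qten T (P z)) (P z).
Proof.
  apply qten_sup_le_l. intros s [->|[y ->]].
  - rewrite qten_unit. apply qle_refl.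
  - rewrite <- qten_assoc. eapply lt; [|apply (c5 y z)]. apply qten_mono_r, c3.
Qed.
Lemma c4 y : qle (qten (Qh y) T) (Qh y).
Proof.
  apply qten_sup_le. intros s [->|[z ->]].
  - rewrite qten_k_r. apply qle_refl.
  - rewrite qten_assoc. eapply lt; [|apply (c2 y z)]. apply qten_mono_l, c3.
Qed.
Lemma c8 : qle (qten T T) T.
Proof.
  apply qten_sup_le. intros s [->|[z ->]].
  - rewrite qten_k_r. apply qle_refl.
  - rewrite qten_assoc. eapply lt; [|apply (c6 z)]. apply qten_mono_l, c7.
Qed.

Lemma ext_refl a : qle qk (ext_hom a a).
Proof. destruct a; simpl. apply vhom_refl. apply qsup_ub. now left. Qed.

Lemma ext_trans a b c : qle (qten (ext_hom a b) (ext_hom b c)) (ext_hom a c).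
Proof.
  destruct a as [a|], b as [b|], c as [c|]; simpl.
  - apply vhom_trans.
  - apply c2.
  - apply c3.
  - apply c4.
  - apply c5.
  - apply c6.
  - apply c7.
  - apply c8.
Qed.

Definition ext_cat : vcat V := @VCat V (option X) ext_hom ext_refl ext_trans.
End Tens.

Lemma inj_tensor {V : quantale} (X : vcat V) (HX : injective_vcat X) (x0 x2 : X) (u v : V) :
  qle (qten u v) (vhom X x0 x2) ->
  exists x1, qle u (vhom X x0 x1) /\ qle v (vhom X x1 x2).
Proof.
  intros Huv.
  destruct (HX X (@ext_cat _ X x0 u) Some (fun a => a)) as [g [Hg Hv]].
  - intros x y. apply qle_refl.
  - intros x y. reflexivity.
  - intros x y. apply qle_refl.
  - exists (g None). split.
    + destruct (Hv x0) as [_ H2].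
      eapply lt; [|apply (vtrans H2 (Hg (Some x0) None))].
      simpl. rewrite qten_unit.
      pose proof (@qten_mono_l _ qk (vhom X x0 x0) u (vhom_refl x0)) as H.
      rewrite qten_unit in H. exact H.
    + destruct (Hv x2) as [H1 _].
      eapply lt; [|apply (vtrans (Hg None (Some x2)) H1)].
      simpl. rewrite qten_k_r. apply qimp_intro. rewrite qten_comm. exact Huv.
Qed.
Section Exp.
Context {V : quantale} (HV : heyting V) (Hmt : meet_tensor_condition V)
  (X Z : vcat V) (HX : injective_vcat X).

Definition Eob : Type :=
  {f : X -> Z | forall x x', qle (qmeet qk (vhom X x x')) (vhom Z (f x) (f x'))}.

Definition Ehom (f g : Eob) : V :=
  qsup (fun u => forall x x', qle (qmeet u (vhom X x x'))
                               (vhom Z (proj1_sig f x) (proj1_sig g x'))).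

Lemma Erefl f : qle qk (Ehom f f).
Proof. apply qsup_ub. apply (proj2_sig f). Qed.

Lemma Etrans f g h : qle (qten (Ehom f g) (Ehom g h)) (Ehom f h).
Proof.
  apply qten_sup_le_l. intros u Hu. apply qten_sup_le. intros v Hv.
  apply qsup_ub. intros x x''. rewrite qmeet_comm, Hmt.
  apply qsup_least. intros w [u' [v' [Hu' [Hv' [Hle ->]]]]].
  destruct (inj_tensor HX Hle) as [x1 [H1 H2]].
  apply vtrans with (y := proj1_sig g x1).
  - eapply lt; [|apply (Hu x x1)]. apply qmeet_glb; auto.
  - eapply lt; [|apply (Hv x1 x'')]. apply qmeet_glb; auto.
Qed.

Definition Ecat : vcat V := @VCat V Eob Ehom Erefl Etrans.

Lemma Ehom_spec (f g : Eob) x x' :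
  qle (qmeet (Ehom f g) (vhom X x x')) (vhom Z (proj1_sig f x) (proj1_sig g x')).
Proof. apply meet_sup_le; [exact HV|]. intros s Hs. apply Hs. Qed.

Lemma sig_ext (f g : Eob) : (forall x, proj1_sig f x = proj1_sig g x) -> f = g.
Proof.
  destruct f as [f Hf], g as [g Hg]; simpl. intros H.
  assert (f = g) by (apply functional_extensionality; auto). subst.
  f_equal. apply proof_irrelevance.
Qed.

Lemma Einj (HZ : injective_vcat Z) : injective_vcat Ecat.
Proof.
  intros A B i f Hi Hff Hf.
  destruct (HZ (vprod A X) (vprod B X) (fun p => (i (fst p), snd p))
              (fun p => proj1_sig (f (fst p)) (snd p))) as [g' [Hg' Hv']].
  - intros [a x] [a' x']. apply qmeet_mono; [apply Hi|apply qle_refl].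
  - intros [a x] [a' x']. unfold vprod, prod_hom; simpl. now rewrite Hff.
  - intros [a x] [a' x']. eapply lt; [|apply (Ehom_spec (f a) (f a') x x')].
    apply qmeet_mono; [apply Hf|apply qle_refl].
  - assert (Hmem : forall b x x', qle (qmeet qk (vhom X x x'))
                                      (vhom Z (g' (b, x)) (g' (b, x')))).
    { intros b x x'. eapply lt; [|apply (Hg' (b, x) (b, x'))].
      apply qmeet_mono; [apply vhom_refl|apply qle_refl]. }
    exists (fun b => exist _ (fun x => g' (b, x)) (Hmem b)). split.
    + intros b b'. apply qsup_ub. intros x x'. apply (Hg' (b, x) (b', x')).
    + intros a. split; apply qsup_ub; intros x x'; simpl.
      * destruct (Hv' (a, x)) as [H1 _]. simpl in H1.
        rewrite <- (qten_unit (qmeet qk (vhom X x x'))).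
        apply (vtrans H1). apply (proj2_sig (f a)).
      * destruct (Hv' (a, x')) as [_ H2]. simpl in H2.
        rewrite <- (qten_k_r (qmeet qk (vhom X x x'))).
        apply (vtrans (proj2_sig (f a) x x') H2).
Qed.
End Exp.
Theorem corollary4p4 (V : quantale) (HV : heyting V)
    (Hmt : meet_tensor_condition V) :
  cartesian_closed_sub (@injective_vcat V).
Proof.
  split; [exists (unit_cat V); apply unit_terminal|]. split.
  { intros A B HA HB. exists (vprod A B), fst, snd. apply prod_is_product; auto. }
  intros X Z HX HZ.
  pose (E := @Ecat V Hmt X Z HX).
  exists E, (vprod E X), fst, snd, (fun p : Eob X Z * X => proj1_sig (fst p) (snd p)).
  assert (HE : injective_vcat E) by (apply (Einj HV); exact HZ).
  split; [exact HE|]. split; [apply prod_is_product; auto|]. split.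
  { intros [f x] [f' x']. apply (Ehom_spec HV). }
  intros A HA Q q1 q2 HQ g Hg.
  destruct HQ as [HPQ [Hq1 [Hq2 HQU]]].
  destruct (proj1 (HQU (vprod A X) (prod_inj HA HX) fst snd
                     (fun x y => qmeet_lb1 _ _) (fun x y => qmeet_lb2 _ _)))
    as [h0 [Hh0 Hh0e]].
  assert (Hid : forall q, h0 (q1 q, q2 q) = q).
  { intros q. apply (proj2 (HQU Q HPQ q1 q2 Hq1 Hq2) (fun q => h0 (q1 q, q2 q)) (fun q => q)).
    - intros x y. eapply lt; [|apply Hh0]. apply qmeet_glb; [apply Hq1|apply Hq2].
    - intros x y; apply qle_refl.
    - intros z. apply Hh0e.
    - intros z; split; reflexivity. }
  assert (Hmem : forall a x x', qle (qmeet qk (vhom X x x'))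
                                    (vhom Z (g (h0 (a, x))) (g (h0 (a, x'))))).
  { intros. eapply lt; [|apply Hg]. eapply lt; [|apply Hh0].
    apply qmeet_mono; [apply vhom_refl|apply qle_refl]. }
  pose (h := fun a => (exist _ (fun x => g (h0 (a, x))) (Hmem a) : E)).
  assert (Hhf : vfunctor h).
  { intros a a'. apply qsup_ub. intros x x'. simpl. eapply lt; [|apply Hg]. apply (Hh0 (a, x) (a', x')). }
  split.
  - exists h. split; [exact Hhf|].
    exists (fun q => (h (q1 q), q2 q)). split.
    + intros x y. apply qmeet_glb; simpl.
      * eapply lt; [apply Hq1|apply Hhf].
      * apply Hq2.
    + intros q. split; [reflexivity|split;[reflexivity|]]. simpl. rewrite Hid. reflexivity.
  - intros k k' _ _ [m [_ Hm]] [m' [_ Hm']] a. apply sig_ext. intros x.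
    specialize (Hm (h0 (a, x))); specialize (Hm' (h0 (a, x))).
    destruct (Hh0e (a, x)) as [Ea Ex]. simpl in Ea, Ex.
    destruct Hm as [M1 [M2 M3]], Hm' as [M1' [M2' M3']].
    rewrite Ea in M1, M1'. rewrite Ex in M2, M2'. simpl in M3, M3'. change (proj1_sig (fst (m (h0 (a, x)))) (snd (m (h0 (a, x)))) = g (h0 (a, x))) in M3. change (proj1_sig (fst (m' (h0 (a, x)))) (snd (m' (h0 (a, x)))) = g (h0 (a, x))) in M3'.
    rewrite M1, M2 in M3. rewrite M1', M2' in M3'. congruence.
Qed.
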